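(* Let $\Lambda$ be a finite non-uniform $m\times k$ rectangular grid with $m\geq 3$ and $k\geq 3$, and let $G$ be the graph produced by the construction described in the context. Then every missing edge that has an endpoint which is a boundary vertex of $\Lambda$ lies in a $2$-cell face of $G$.
   Context: $\Lambda$ has horizontal lines $h_1,\dots,h_m$ (bottom to top) and vertical lines $v_1,\dots,v_k$ (left to right) with arbitrary spacings; $p_{i,j}=h_i\cap v_j$. Its edges are the segments $p_{i,j}p_{i+1,j}$ and $p_{i,j}p_{i,j+1}$. Vertices on $h_1,h_m,v_1,v_k$ are boundary vertices; an edge with both endpoints boundary vertices is a boundary edge, all others are internal. The horizontal slab $H_i$ ($1\le i<m$) is the strip between $h_i,h_{i+1}$; the vertical slab $V_j$ ($1\le j<k$) is the strip between $v_j,v_{j+1}$; the width of a slab is the distance between its bounding lines. The red edges are $(p_{i,j},p_{i+1,j})$ and $(p_{i,j},p_{i,j+1})$ for $2\le i\le m-1$, $2\le j\le k-1$ with $i,j$ both even or both odd; all other internal edges are blue. Construction: let $G'$ be $\Lambda$ with all red edges removed, and $E'=\emptyset$. Iterate over the slabs $H_1,\dots,H_{m-1},V_1,\dots,V_{k-1}$ in non-decreasing order of width; for the current slab, consider the red edges lying in it (in any order); a red edge $(a,b)$ is added to $E'$ if both $a$ and $b$ currently have degree exactly $2$ in $G'\cup E'$. Finally $G=G'\cup E'$ (a plane straight-line graph). A missing edge is a red edge not in $G$. A cell of $\Lambda$ is a rectangle bounded by two consecutive horizontal and two consecutive vertical lines; a $2$-cell face of $G$ is a bounded face of $G$ that is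 the union of exactly two cells. *)

(* Defs.v *)
From mathcomp Require Import all_boot all_order all_algebra.
Set Implicit Arguments. Unset Strict Implicit. Unset Printing Implicit Defensive.
Import Order.TTheory GRing.Theory Num.Theory.

(* Vertices p_{i,j} are 0-indexed: (i, j) : 'I_m * 'I_k, i = row (horizontal line
   h_{i+1}), j = column (vertical line v_{j+1}). *)
Notation vtx m k := ('I_m * 'I_k)%type.
(* An edge is an oriented pair (u, v) with v the right or upper neighbour of u. *)
Notation edge m k := (vtx m k * vtx m k)%type.
(* Slab inl a = H_{a+1} (between rows a and a+1), inr b = V_{b+1}. *)
Notation slab m k := ('I_m.-1 + 'I_k.-1)%type.
(* Cell (a, b) = rectangle with corners rows a,a+1 and columns b,b+1. *)
Notation cell m k := ('I_m.-1 * 'I_k.-1)%type.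

Definition gedge m k (e : edge m k) : bool :=
  let: (u, v) := e in
  ((u.1 == v.1) && (u.2.+1 == v.2 :> nat)) || ((u.2 == v.2) && (u.1.+1 == v.1 :> nat)).

Definition bvtx m k (u : vtx m k) : bool :=
  [|| (u.1 == 0 :> nat), (u.1 == m.-1 :> nat), (u.2 == 0 :> nat) | (u.2 == k.-1 :> nat)].

(* red edges: lower/left endpoint p_{i,j} with 2<=i<=m-1, 2<=j<=k-1 (1-indexed),
   i, j of equal parity *)
Definition red m k (e : edge m k) : bool :=
  [&& gedge e, 0 < e.1.1 < m.-1, 0 < e.1.2 < k.-1 & odd e.1.1 == odd e.1.2].

Definition Gprime m k : {set edge m k} := [set e | gedge e && ~~ red e].

Definition deg m k (E : {set edge m k}) (x : vtx m k) : nat :=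
  #|[set e in E | (e.1 == x) || (e.2 == x)]|.

Definition step m k (E : {set edge m k}) (e : edge m k) : {set edge m k} :=
  if (deg (Gprime m k :|: E) e.1 == 2) && (deg (Gprime m k :|: E) e.2 == 2)
  then e |: E else E.

Definition Eprime m k (order : seq (edge m k)) : {set edge m k} :=
  foldl (@step m k) set0 order.

Definition Gfinal m k (order : seq (edge m k)) : {set edge m k} :=
  Gprime m k :|: Eprime order.

Definition in_slab m k (s : slab m k) (e : edge m k) : bool :=
  match s with
  | inl a => (e.1.1 == a :> nat) && (e.1.2 == e.2.2)
  | inr b => (e.1.2 == b :> nat) && (e.1.1 == e.2.1)
  end.

Definition red_in m k (s : slab m k) : seq (edge m k) :=
  [seq e <- enum [set: edge m k] | red e && in_slab s e].

(* hpos i = y-coordinate of h_{i+1}, vpos j = x-coordinate of v_{j+1} *)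
Definition width (R : numDomainType) m k (hpos vpos : nat -> R) (s : slab m k) : R :=
  match s with
  | inl a => hpos a.+1 - hpos a
  | inr b => vpos b.+1 - vpos b
  end.

(* faces of a subgraph of Lambda containing all boundary edges:
   cells glued along missing grid edges *)
Definition corner m k (c : cell m k) (v : vtx m k) : bool :=
  ((v.1 == c.1 :> nat) || (v.1 == c.1.+1 :> nat)) &&
  ((v.2 == c.2 :> nat) || (v.2 == c.2.+1 :> nat)).

Definition borders m k (c : cell m k) (e : edge m k) : bool :=
  corner c e.1 && corner c e.2.

Definition cell_adj m k (G : {set edge m k}) : rel (cell m k) :=
  fun c d => (c != d) &&
    [exists e : edge m k, [&& gedge e, e \notin G, borders c e & borders d e]].

Definition face m k (G : {set edge m k}) (c : cell m k) : {set cell m k} :=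
  [set d | connect (cell_adj G) c d].

Definition in_2cell_face m k (G : {set edge m k}) (e : edge m k) : bool :=
  [exists c : cell m k, borders c e && (#|face G c| == 2)].

(* Main.v *)
Require Import Defs.
From mathcomp Require Import all_boot all_order all_algebra.
From mathcomp Require Import zify.
Import Order.TTheory GRing.Theory Num.Theory.

Lemma edge_eqE m k (x y : edge m k) : (x == y) =
  [&& x.1.1 == y.1.1 :> nat, x.1.2 == y.1.2 :> nat, x.2.1 == y.2.1 :> nat & x.2.2 == y.2.2 :> nat].
Proof. by case: x => [[a b] [c d]]; case: y => [[a' b'] [c' d']]; rewrite /= !xpair_eqE -!andbA. Qed.

Lemma vtx_eqE m k (x y : vtx m k) : (x == y) = (x.1 == y.1 :> nat) && (x.2 == y.2 :> nat).
Proof. by case: x => [a b]; case: y => [a' b']; rewrite /= !xpair_eqE. Qed.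

Lemma cell_eqE m k (x y : cell m k) : (x == y) = (x.1 == y.1 :> nat) && (x.2 == y.2 :> nat).
Proof. by case: x => [a b]; case: y => [a' b']; rewrite /= !xpair_eqE. Qed.

Definition redset m k := [set x : edge m k | red x].

Lemma step_sub m k (E : {set edge m k}) x : E \subset step E x.
Proof. rewrite /step; case: ifP => _; [exact: subsetUr | exact: subxx]. Qed.

Lemma foldl_sub m k (s : seq (edge m k)) (E : {set edge m k}) : E \subset foldl (@step m k) E s.
Proof. elim: s E => //= x s IH E; apply: (subset_trans (step_sub _ _ E x)); exact: IH. Qed.

Lemma trace m k (s : seq (edge m k)) (E0 : {set edge m k}) e : all (@red m k) s -> E0 \subset redset m k ->
  e \in s -> e \notin foldl (@step m k) E0 s ->
  exists E : {set edge m k}, [/\ E \subset redset m k, E \subset foldl (@step m k) E0 s &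
   ~~ ((deg (Gprime m k :|: E) e.1 == 2) && (deg (Gprime m k :|: E) e.2 == 2))].
Proof.
elim: s E0 => //= x s IH E0 /andP[rx rs] HE0; rewrite inE => /orP[/eqP ->|es] Hn.
  exists E0; split => //; first by apply: (subset_trans (step_sub _ _ E0 x)); exact: foldl_sub.
  apply/negP => H; move/negP: Hn; apply; apply: (subsetP (foldl_sub _ _ _ _)).
  by rewrite /step H setU11.
apply: IH => //; rewrite /step; case: ifP => // _; apply/subsetP => y.
by rewrite !inE => /orP[/eqP->|/(subsetP HE0)]; rewrite ?inE.
Qed.

Lemma face2 m k (G : {set edge m k}) e c1 c2 : c1 != c2 -> gedge e -> e \notin G ->
  borders c1 e -> borders c2 e ->
  (forall x y, x \in [set c1; c2] -> cell_adj G x y -> y \in [set c1; c2]) ->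
  in_2cell_face G e.
Proof.
move=> cn ge eG b1 b2 Hcl; apply/existsP; exists c1; rewrite b1 /=.
have -> : face G c1 = [set c1; c2].
  apply/setP => y; rewrite inE; apply/idP/idP.
    move/connectP => [p Hp ->].
    have key : forall x p, x \in [set c1; c2] -> path (cell_adj G) x p -> last x p \in [set c1; c2].
      move=> x0 p0; elim: p0 x0 => //= z p0 IH x0 Hx /andP[Hxz Hp0].
      exact: IH (Hcl _ _ Hx Hxz) Hp0.
    by apply: key Hp; rewrite !inE eqxx.
  rewrite !inE => /orP[/eqP->|/eqP->]; first exact: connect0.
  apply: connect1; rewrite /cell_adj cn /=; apply/existsP; exists e.
  by rewrite ge eG b1 b2.
by rewrite cards2 cn.
Qed.

Ltac bdestr := repeat match goal with
 | H : is_true (_ && _) |- _ => case/andP: H => ? ?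
 | H : is_true (_ || _) |- _ => case/orP: H => ?
 | H : is_true (@eq_op _ _ _) |- _ => move/eqP: H => ?
 end.

Lemma ordE n (x y : 'I_n) : (x == y) = (x == y :> nat).
Proof. by []. Qed.

Ltac arith T := lazymatch T with
  | context [@in_mem _ _ _] => fail
  | context [deg _ _] => fail
  | context [red _] => fail
  | context [all _ _] => fail
  | _ => idtac end.

Ltac natsolve :=
  repeat match goal with
   | H : is_true ?T |- _ => arith T; assert_succeeds (clear H); revert H
   | H : @eq nat _ _ |- _ => revert H end;
  rewrite ?ordE;
  repeat match goal with |- context [@nat_of_ord ?n ?x] =>
    let X := fresh "X" in have := @ltn_ord n x; generalize (@nat_of_ord n x) => X end;
  repeat match goal with H : _ |- _ => clear H end;
  intros; bdestr; subst; lia.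

Lemma par x y : odd x = odd y -> y.-1 <= x <= y.+1 -> 0 < y -> x = y.
Proof. move=> h1 h2 h3; move: h1 h2 h3; natsolve. Qed.

Lemma deg2 m k (E : {set edge m k}) v (y1 y2 : edge m k) : y1 != y2 ->
  (forall x, ((x \in Gprime m k) || (x \in E)) && ((x.1 == v) || (x.2 == v)) = (x == y1) || (x == y2)) ->
  deg (Gprime m k :|: E) v == 2.
Proof.
move=> yn H; rewrite /deg.
have -> : [set x in Gprime m k :|: E | (x.1 == v) || (x.2 == v)] = [set y1; y2].
  by apply/setP => x; rewrite !inE -H inE.
by rewrite cards2 yn.
Qed.

Lemma case_top M K (ord : seq (edge M.+3 K.+3)) (e : edge M.+3 K.+3) :
  all (@red _ _) ord -> e \in ord -> red e -> e \notin Gfinal ord ->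
  e.2.1 = M.+2 :> nat -> in_2cell_face (Gfinal ord) e.
Proof.
move=> Hord.
case: e => [[a b] [c d]] Hin re eG /= Ht.
have /and4P[ge Ha Hb Hp] := re; rewrite /gedge /= in ge Ha Hb Hp.
have Ha' : (a : nat) = M.+1 by natsolve.
have Hd : (d : nat) = b by natsolve.
clear ge.
have hb1 : b.+1 < K.+3 by natsolve.
have hb0 : b.-1 < K.+3 by natsolve.
have ha0 : a.-1 < M.+3 by natsolve.
have ha : a < M.+2 by natsolve.
have hbk : b < K.+2 by natsolve.
have hbk' : b.-1 < K.+2 by natsolve.
have rf : red ((a, b), (a, Ordinal hb1)).
  by apply/and4P; split => //=; rewrite /gedge /=; natsolve.
have nru : ~~ red ((Ordinal ha0, b), (a, b)) by rewrite /red /gedge /=; natsolve.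
have nrl : ~~ red ((a, Ordinal hb0), (a, b)) by rewrite /red /gedge /=; natsolve.
clear Hp.
have eG' : ((a, b), (c, d)) \notin foldl (@step _ _) set0 ord.
  by move: eG; rewrite /Gfinal /Eprime inE negb_or => /andP[].
have [E [HER HEF Hdeg]] := @trace _ _ ord set0 _ Hord (sub0set _) Hin eG'.
have HeE : ((a, b), (c, d)) \notin E.
  by apply/negP => /(subsetP HEF); apply/negP.
have HER' : forall x, x \in E -> red x.
  by move=> x /(subsetP HER); rewrite inE.
have Dt : deg (Gprime _ _ :|: E) (c, d) == 2.
  apply: (@deg2 _ _ _ _ ((c, Ordinal hb0), (c, d)) ((c, d), (c, Ordinal hb1)))
    => [|[[x1 x2] [x3 x4]]]; first by rewrite edge_eqE /=; natsolve.
  rewrite !inE; apply/idP/idP.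
    case/andP => H tx.
    have gx : gedge ((x1, x2), (x3, x4)).
      by case/orP: H => [/andP[]//|/HER' /and4P[]].
    case: (eqVneq ((x1, x2), (x3, x4)) ((a, b), (c, d))) => [xe|xne].
      by move: H; rewrite xe re (negbTE HeE) andbF.
    move: xne gx tx; rewrite !edge_eqE /gedge /= !vtx_eqE /=; natsolve.
  case/orP => /eqP ->; rewrite orbC andbC !vtx_eqE /=; apply/andP; split; try natsolve;
    apply/orP; right; rewrite /gedge /red /=; natsolve.
have HfE : ((a, b), (a, Ordinal hb1)) \in E.
  apply: contraT => HfE.
  have Du : deg (Gprime _ _ :|: E) (a, b) == 2.
    apply: (@deg2 _ _ _ _ ((Ordinal ha0, b), (a, b)) ((a, Ordinal hb0), (a, b)))
      => [|[[x1 x2] [x3 x4]]]; first by rewrite edge_eqE /=; natsolve.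
    rewrite !inE; apply/idP/idP.
      case/andP => H tx.
      have gx : gedge ((x1, x2), (x3, x4)).
        by case/orP: H => [/andP[]//|/HER' /and4P[]].
      case: (eqVneq ((x1, x2), (x3, x4)) ((a, b), (c, d))) => [xe|xne].
        by move: H; rewrite xe re (negbTE HeE) andbF.
      case: (eqVneq ((x1, x2), (x3, x4)) ((a, b), (a, Ordinal hb1))) => [xf|xnf].
        by move: H; rewrite xf (negbTE HfE) rf andbF.
      move: xne xnf gx tx; rewrite !edge_eqE /gedge /= !vtx_eqE /=; natsolve.
    case/orP => /eqP ->; apply/andP; split;
      (try (apply/orP; left; rewrite ?nru ?nrl andbT /gedge /=; natsolve)); rewrite !vtx_eqE /=; natsolve.
  by move: Hdeg; rewrite /= Du Dt.
have HfG : ((a, b), (a, Ordinal hb1)) \in Gfinal ord.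
  by rewrite /Gfinal /Eprime inE (subsetP HEF _ HfE) orbT.
apply: (@face2 _ _ _ _ ((Ordinal ha, Ordinal hbk') : cell M.+3 K.+3) ((Ordinal ha, Ordinal hbk) : cell M.+3 K.+3)) => //.
- by rewrite cell_eqE /=; natsolve.
- by case/and4P: re.
- by rewrite /borders /corner /=; natsolve.
- by rewrite /borders /corner /=; natsolve.
move=> [y1 y2] [z1 z2] Hy /andP[_ /existsP[[[w1 w2] [w3 w4]] /and4P[gw wG bw bz]]].
case: (eqVneq ((w1, w2), (w3, w4)) ((a, b), (c, d))) => [we|wne].
  by move: bz; rewrite we /borders /corner /= !inE !xpair_eqE !ordE /=; natsolve.
case: (eqVneq ((w1, w2), (w3, w4)) ((a, b), (a, Ordinal hb1))) => [wf|wnf].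
  by move: wG; rewrite wf HfG.
have rw : red ((w1, w2), (w3, w4)).
  by move: wG; rewrite /Gfinal !inE gw /= negb_or => /andP[/negbNE].
case/andP: bw => bw _.
have [Hw1 Hw2] : (w1 : nat) = a /\ (w2 : nat) = b.
  move: Hy bw rw; rewrite !inE !xpair_eqE !ordE /corner /red /gedge /=.
  move=> Hy bw /and4P[_ r1 r2 r3].
  have [Hw1 Hw2] : (w1 : nat) = a /\ (b.-1 <= w2 <= b.+1).
    by move: Hy bw r1; clear bz gw; natsolve.
  split => //; apply: par => //.
    by move/eqP: r3 => <-; case/and4P: re => _ _ _ /eqP <-; rewrite Hw1.
  by case/and4P: re => _ _ /andP[].
move: rw wne wnf; rewrite /red /gedge /= ?edge_eqE /= => /and4P[gw' _ _ _].
move: gw'; natsolve.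
Qed.

Lemma case_right M K (ord : seq (edge M.+3 K.+3)) (e : edge M.+3 K.+3) :
  all (@red _ _) ord -> e \in ord -> red e -> e \notin Gfinal ord ->
  e.2.2 = K.+2 :> nat -> in_2cell_face (Gfinal ord) e.
Proof.
move=> Hord.
case: e => [[a b] [c d]] Hin re eG /= Ht.
have /and4P[ge Ha Hb Hp] := re; rewrite /gedge /= in ge Ha Hb Hp.
have Hb' : (b : nat) = K.+1 by natsolve.
have Hc : (c : nat) = a by natsolve.
clear ge.
have ha1 : a.+1 < M.+3 by natsolve.
have hb0 : b.-1 < K.+3 by natsolve.
have ha0 : a.-1 < M.+3 by natsolve.
have ha : a < M.+2 by natsolve.
have hbk : b < K.+2 by natsolve.
have ha' : a.-1 < M.+2 by natsolve.
have rf : red ((a, b), (Ordinal ha1, b)).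
  by apply/and4P; split => //=; rewrite /gedge /=; natsolve.
have nru : ~~ red ((Ordinal ha0, b), (a, b)) by rewrite /red /gedge /=; natsolve.
have nrl : ~~ red ((a, Ordinal hb0), (a, b)) by rewrite /red /gedge /=; natsolve.
clear Hp.
have eG' : ((a, b), (c, d)) \notin foldl (@step _ _) set0 ord.
  by move: eG; rewrite /Gfinal /Eprime inE negb_or => /andP[].
have [E [HER HEF Hdeg]] := @trace _ _ ord set0 _ Hord (sub0set _) Hin eG'.
have HeE : ((a, b), (c, d)) \notin E.
  by apply/negP => /(subsetP HEF); apply/negP.
have HER' : forall x, x \in E -> red x.
  by move=> x /(subsetP HER); rewrite inE.
have Dt : deg (Gprime _ _ :|: E) (c, d) == 2.
  apply: (@deg2 _ _ _ _ ((Ordinal ha0, d), (c, d)) ((c, d), (Ordinal ha1, d)))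
    => [|[[x1 x2] [x3 x4]]]; first by rewrite edge_eqE /=; natsolve.
  rewrite !inE; apply/idP/idP.
    case/andP => H tx.
    have gx : gedge ((x1, x2), (x3, x4)).
      by case/orP: H => [/andP[]//|/HER' /and4P[]].
    case: (eqVneq ((x1, x2), (x3, x4)) ((a, b), (c, d))) => [xe|xne].
      by move: H; rewrite xe re (negbTE HeE) andbF.
    move: xne gx tx; rewrite !edge_eqE /gedge /= !vtx_eqE /=; natsolve.
  case/orP => /eqP ->; apply/andP; split;
    (try (apply/orP; left; rewrite /red /gedge /=; natsolve)); rewrite !vtx_eqE /=; natsolve.
have HfE : ((a, b), (Ordinal ha1, b)) \in E.
  apply: contraT => HfE.
  have Du : deg (Gprime _ _ :|: E) (a, b) == 2.
    apply: (@deg2 _ _ _ _ ((Ordinal ha0, b), (a, b)) ((a, Ordinal hb0), (a, b)))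
      => [|[[x1 x2] [x3 x4]]]; first by rewrite edge_eqE /=; natsolve.
    rewrite !inE; apply/idP/idP.
      case/andP => H tx.
      have gx : gedge ((x1, x2), (x3, x4)).
        by case/orP: H => [/andP[]//|/HER' /and4P[]].
      case: (eqVneq ((x1, x2), (x3, x4)) ((a, b), (c, d))) => [xe|xne].
        by move: H; rewrite xe re (negbTE HeE) andbF.
      case: (eqVneq ((x1, x2), (x3, x4)) ((a, b), (Ordinal ha1, b))) => [xf|xnf].
        by move: H; rewrite xf (negbTE HfE) rf andbF.
      move: xne xnf gx tx; rewrite !edge_eqE /gedge /= !vtx_eqE /=; natsolve.
    case/orP => /eqP ->; apply/andP; split;
      (try (apply/orP; left; rewrite ?nru ?nrl andbT /gedge /=; natsolve)); rewrite !vtx_eqE /=; natsolve.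
  by move: Hdeg; rewrite /= Du Dt.
have HfG : ((a, b), (Ordinal ha1, b)) \in Gfinal ord.
  by rewrite /Gfinal /Eprime inE (subsetP HEF _ HfE) orbT.
apply: (@face2 _ _ _ _ ((Ordinal ha', Ordinal hbk) : cell M.+3 K.+3) ((Ordinal ha, Ordinal hbk) : cell M.+3 K.+3)) => //.
- by rewrite cell_eqE /=; natsolve.
- by case/and4P: re.
- by rewrite /borders /corner /=; natsolve.
- by rewrite /borders /corner /=; natsolve.
move=> [y1 y2] [z1 z2] Hy /andP[_ /existsP[[[w1 w2] [w3 w4]] /and4P[gw wG bw bz]]].
case: (eqVneq ((w1, w2), (w3, w4)) ((a, b), (c, d))) => [we|wne].
  by move: bz; rewrite we /borders /corner /= !inE !xpair_eqE !ordE /=; natsolve.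
case: (eqVneq ((w1, w2), (w3, w4)) ((a, b), (Ordinal ha1, b))) => [wf|wnf].
  by move: wG; rewrite wf HfG.
have rw : red ((w1, w2), (w3, w4)).
  by move: wG; rewrite /Gfinal !inE gw /= negb_or => /andP[/negbNE].
case/andP: bw => bw _.
have [Hw1 Hw2] : (w1 : nat) = a /\ (w2 : nat) = b.
  move: Hy bw rw; rewrite !inE !xpair_eqE !ordE /corner /red /gedge /=.
  move=> Hy bw /and4P[_ r1 r2 r3].
  have [Hw1 Hw2] : (a.-1 <= w1 <= a.+1) /\ (w2 : nat) = b.
    by move: Hy bw r2; clear bz gw; natsolve.
  split => //; apply: par => //.
    by move/eqP: r3 => ->; case/and4P: re => _ _ _ /eqP ->; rewrite Hw2.
  by case/and4P: re => _ /andP[].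
move: rw wne wnf; rewrite /red /gedge /= ?edge_eqE /= => /and4P[gw' _ _ _].
move: gw'; natsolve.
Qed.

Local Open Scope ring_scope.

Theorem lemma3 (R : realFieldType) (m k : nat) (hm : (3 <= m)%N) (hk : (3 <= k)%N)
  (hpos vpos : nat -> R)
  (Hh : forall i : nat, (i.+1 < m)%N -> hpos i < hpos i.+1)
  (Hv : forall j : nat, (j.+1 < k)%N -> vpos j < vpos j.+1)
  (so : seq (slab m k)) (eo : slab m k -> seq (edge m k))
  (Hso : perm_eq so (enum [set: slab m k]))
  (Hsorted : sorted (fun s t => width hpos vpos s <= width hpos vpos t) so)
  (Heo : forall s, perm_eq (eo s) (red_in s))
  (e : edge m k) :
  red e -> e \notin Gfinal (flatten (map eo so)) ->
  bvtx e.1 || bvtx e.2 ->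
  in_2cell_face (Gfinal (flatten (map eo so))) e.
Proof.
have [M HM] : exists M, m = M.+3 by exists (m - 3)%N; lia.
have [K HK] : exists K, k = K.+3 by exists (k - 3)%N; lia.
subst m k.
have Hord : all (@red _ _) (flatten (map eo so)).
  apply/allP => x /flatten_mapP[s _]; rewrite (perm_mem (Heo s)) mem_filter.
  by case/andP => /andP[].
have Hmem : forall s x, red x -> in_slab s x -> x \in flatten (map eo so).
  move=> s x rx sx; apply/flatten_mapP; exists s.
    by rewrite (perm_mem Hso) mem_enum inE.
  by rewrite (perm_mem (Heo s)) mem_filter rx sx mem_enum inE.
case: e => [[a b] [c d]] re eG Hb.
have /and4P[ge Ha Hb2 Hp] := re; rewrite /gedge /= in ge Ha Hb2.
have [Htop|Hright] : (c : nat) = M.+2 \/ (d : nat) = K.+2.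
  by move: Hb; rewrite /bvtx /=; natsolve.
  apply: case_top => //.
  apply: (Hmem (inl (Ordinal (ltnSn M.+1)) : slab M.+3 K.+3)) => //.
  by rewrite /in_slab /= ordE; natsolve.
apply: case_right => //.
apply: (Hmem (inr (Ordinal (ltnSn K.+1)) : slab M.+3 K.+3)) => //.
by rewrite /in_slab /= ordE; natsolve.
Qed.
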